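(* Let $q\ge5$ be coprime to $6$, let $\chi$ be a real primitive Dirichlet character of conductor $q$, and let $f:\mathbb{N}\to\{-1,1\}$ be a multiplicative function with $\mathbb{D}(f,\chi;\infty)<\infty$. If $S\subset\{0,1,2,3\}$ has size $2$ or $3$, then $\Xi_{\boldsymbol a}(S)=0$ for any vector $\boldsymbol a=(a_j)_{j\in S}$ of divisors of $q$.
   Context: $\mathbb{D}(f,g;\infty)^2=\lim_{x\to\infty}\sum_{p\le x}\frac{1-\mathrm{Re}(f(p)\overline{g(p)})}{p}$. For $S\subseteq\{0,1,2,3\}$ and $\boldsymbol a=(a_j)_{j\in S}$, $\Xi_{\boldsymbol a}(S):=\sum\prod_{j\in S}\chi(b_j)$, the sum over residues $(b_j)_{j\in S}$ mod $q$ for which there exist integers $n,d$ with $a_j\mid n+jd$ and $(n+jd)/a_j\equiv b_j\pmod q$ for all $j\in S$. *)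

(* Defs.v *)
From HB Require Import structures.
From mathcomp Require Import all_boot all_order all_algebra.
From mathcomp Require Import boolp classical_sets reals topology normedtype sequences.
Set Implicit Arguments. Unset Strict Implicit. Unset Printing Implicit Defensive.
Import Order.TTheory GRing.Theory Num.Theory numFieldNormedType.Exports.
Local Open Scope ring_scope.

Definition dirichlet_char (q : nat) (chi : nat -> int) : Prop :=
  [/\ chi 1%N = 1,
      (forall m n : nat, chi (m * n)%N = chi m * chi n),
      (forall n : nat, chi (n + q)%N = chi n)
    & (forall n : nat, (chi n == 0) = ~~ coprime n q)].

(* chi is primitive modulo q (its conductor is q): the only induced modulus
   d dividing q (chi constant on classes mod d among units mod q) is q itself. *)
Definition primitive_char (q : nat) (chi : nat -> int) : Prop :=
  dirichlet_char q chi /\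
  forall d : nat, (d %| q)%N ->
    (forall m n : nat, coprime m q -> coprime n q -> m = n %[mod d] -> chi m = chi n) ->
    d = q.

Definition multiplicative_pm1 (f : nat -> int) : Prop :=
  [/\ f 1%N = 1,
      (forall n : nat, (0 < n)%N -> f n = 1 \/ f n = -1)
    & (forall m n : nat, (0 < m)%N -> (0 < n)%N -> coprime m n -> f (m * n)%N = f m * f n)].

(* Partial sums  sum_{p <= x} (1 - Re(f(p) conj(g(p))))/p  for real-valued f, g. *)
Definition pdist_partial (R : realType) (f g : nat -> int) (x : nat) : R :=
  \sum_(p < x.+1 | prime p) (1 - (f p * g p)%:~R) / (p%:R).

Definition pdist_finite (R : realType) (f g : nat -> int) : Prop :=
  cvgn (pdist_partial R f g).

(* Xi_a(S) = sum over residues (b_j)_{j in S} mod q admissible for some integers n,d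
   of prod_{j in S} chi(b_j).  Tuples indexed by S are encoded as functions 'I_4 -> 'I_q
   that vanish outside S. *)
Definition Xi (q : nat) (chi : nat -> int) (a : 'I_4 -> nat) (S : {set 'I_4}) : int :=
  \sum_(b : {ffun 'I_4 -> 'I_q} |
          [forall j, (j \notin S) ==> (nat_of_ord (b j) == 0%N)] &&
          `[< exists n d : int, forall j : 'I_4, j \in S ->
                ((a j)%:Z %| n + (nat_of_ord j)%:Z * d)%Z /\
                (((n + (nat_of_ord j)%:Z * d) %/ (a j)%:Z)%Z = (nat_of_ord (b j))%:Z %[mod q%:Z])%Z >])
     \prod_(j in S) chi (nat_of_ord (b j)).

(* Main.v *)
Require Import Defs.
From HB Require Import structures.
From mathcomp Require Import all_boot all_order all_algebra.
From mathcomp Require Import boolp classical_sets reals topology normedtype sequences.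
From mathcomp Require Import zify ring.
Import Order.TTheory GRing.Theory Num.Theory numFieldNormedType.Exports.
Set Implicit Arguments. Unset Strict Implicit.
Local Open Scope ring_scope.

Lemma chi_per q chi n k : dirichlet_char q chi -> chi (n + k * q)%N = chi n.
Proof.
case=> _ _ hp _; elim: k => [|k IH]; first by rewrite mul0n addn0.
by rewrite mulSn addnCA addnC hp.
Qed.

Lemma chi_mod q chi n : dirichlet_char q chi -> chi (n %% q)%N = chi n.
Proof. by move=> hc; rewrite {2}(divn_eq n q) addnC chi_per. Qed.

Lemma inv_mod (q c : nat) : (1 < q)%N -> coprime c q -> exists c', (c' * c = 1 %[mod q])%N.
Proof.
move=> hq hcq.
have c0 : (0 < c)%N.
  case: c hcq => // ; rewrite /coprime gcd0n => /eqP h; lia.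
case: (egcdnP q c0) => km kn h _; exists km.
rewrite h; move: hcq; rewrite /coprime => /eqP ->.
by rewrite modnMDl.
Qed.

Lemma chi_pm1 q chi c : (1 < q)%N -> dirichlet_char q chi -> coprime c q -> chi c = 1 \/ chi c = -1.
Proof.
move=> hq hc hcq; case: (inv_mod hq hcq) => c' h.
have : chi c' * chi c = 1.
  case: (hc) => h1 hm _ _; rewrite -hm -(@chi_mod q chi) // h (@chi_mod q chi) // modn_small //.
move=> /(congr1 absz); rewrite abszM => /eqP; rewrite muln_eq1 => /andP[_ /eqP h']. lia.
Qed.

Lemma exists_neg q chi : (5 <= q)%N -> primitive_char q chi -> exists c, coprime c q /\ chi c = -1.
Proof.
move=> hq [hc hp].
apply: contrapT => hn.
have h1 : forall m, coprime m q -> chi m = 1.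
  move=> m hm; have hq1 : (1 < q)%N by lia.
  case: (@chi_pm1 q chi m hq1 hc hm) => // hm1.
  by exfalso; apply: hn; exists m.
have := hp 1%N (dvd1n q) (fun m n hm hn _ => etrans (h1 m hm) (esym (h1 n hn))).
lia.
Qed.

Definition scal (q : nat) (Hq : (0 < q)%N) (c : nat) (T : {set 'I_4})
  (b : {ffun 'I_4 -> 'I_q}) : {ffun 'I_4 -> 'I_q} :=
  [ffun j => if j \in T then Ordinal (ltn_pmod (c * b j) Hq) else b j].

Definition Eadm (q : nat) (a : 'I_4 -> nat) (S : {set 'I_4}) (b : {ffun 'I_4 -> 'I_q}) : Prop :=
  exists n d : int, forall j : 'I_4, j \in S ->
                ((a j)%:Z %| n + (nat_of_ord j)%:Z * d)%Z /\
                (((n + (nat_of_ord j)%:Z * d) %/ (a j)%:Z)%Z = (nat_of_ord (b j))%:Z %[mod q%:Z])%Z.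

Lemma sum_neg (I : finType) (P : pred I) (F : I -> int) h :
  injective h -> (forall b, P (h b) = P b) -> (forall b, F (h b) = - F b) ->
  \sum_(b | P b) F b = 0.
Proof.
move=> hi hP hF; have := reindex_inj (op := +%R) (x := 0) (P := P) (F := F) hi.
under [X in _ = X -> _]eq_bigl do rewrite hP.
under [X in _ = X -> _]eq_bigr do rewrite hF.
rewrite sumrN => e.
have e2 : \sum_(b | P b) F b = - \sum_(b | P b) F b := e.
lia.
Qed.

Lemma scalK q (Hq : (0 < q)%N) c c' T : (c' * c = 1 %[mod q])%N ->
  cancel (scal Hq c T) (scal Hq c' T).
Proof.
move=> h b; apply/ffunP => j; rewrite !ffunE.
case: ifP => hj; rewrite hj //.
apply: val_inj => /=.
by rewrite modnMmr mulnA -modnMml h modnMml mul1n (modn_small (ltn_ord _)).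
Qed.

Lemma prod_scal q (Hq : (0 < q)%N) chi c (T S : {set 'I_4}) (b : {ffun 'I_4 -> 'I_q}) : dirichlet_char q chi -> T \subset S ->
  \prod_(j in S) chi (scal Hq c T b j) = chi c ^+ #|T| * \prod_(j in S) chi (b j).
Proof.
move=> hc hTS.
have hm : forall m n, chi (m * n)%N = chi m * chi n by case: hc.
rewrite (eq_bigr (fun j => (if j \in T then chi c else 1) * chi (b j))); last first.
  move=> j _; rewrite ffunE; case: ifP => _ /=; last by rewrite mul1r.
  by rewrite (@chi_mod q chi) // hm.
rewrite big_split /=; congr (_ * _).
rewrite -big_mkcondr /= -prodr_const; apply: eq_bigl => j.
apply/andP/idP => [[] // | hj]; split => //; exact: (fintype.subsetP hTS _ hj).
Qed.

Lemma E_scal q (Hq : (0 < q)%N) (a : 'I_4 -> nat) (S : {set 'I_4}) (c : nat) (b : {ffun 'I_4 -> 'I_q}) :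
  (forall j, j \in S -> (0 < a j)%N) -> Eadm a S b -> Eadm a S (scal Hq c S b).
Proof.
move=> ha [n [d hnd]]; exists (c%:Z * n), (c%:Z * d) => j hj.
have [h1 h2] := hnd j hj; rewrite ffunE hj /=.
have -> : c%:Z * n + (nat_of_ord j)%:Z * (c%:Z * d) = c%:Z * (n + (nat_of_ord j)%:Z * d) by ring.
split; first exact: dvdz_mull.
have ha0 : (a j)%:Z != 0 by have := ha j hj; lia.
rewrite -(divzK h1) mulrA mulzK //.
rewrite -modz_nat modz_mod PoszM -modzMmr h2 modzMmr //.
Qed.

Lemma dist46 (i j : 'I_4) : i != j -> (`|(nat_of_ord j)%:Z - (nat_of_ord i)%:Z|%N %| 6)%N.
Proof. by case: i => [[|[|[|[|?]]]] ?] //; case: j => [[|[|[|[|?]]]] ?]. Qed.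

Lemma E_two q (a : 'I_4 -> nat) (i j : 'I_4) (b : {ffun 'I_4 -> 'I_q}) :
  (0 < q)%N -> coprime q 6 -> (a i %| q)%N -> (a j %| q)%N -> i != j ->
  Eadm a [set i; j] b.
Proof.
move=> hq hq6 hdi hdj hij.
pose u := nat_of_ord (b i); pose v := nat_of_ord (b j).
have hai : (0 < a i)%N by apply: dvdn_gt0 hdi.
have haj : (0 < a j)%N by apply: dvdn_gt0 hdj.
pose m : int := (nat_of_ord j)%:Z - (nat_of_ord i)%:Z.
pose k := `|m|%N.
have hk6 : (k %| 6)%N.
  exact: dist46.
have hqk : coprime q k by apply: coprime_dvdr hk6 hq6.
have hco : coprime (a i * q) k by rewrite coprimeMl hqk andbT; apply: coprime_dvdl hdi hqk.
pose X := chinese (a i * q) k (a i * u) (a j * v).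
have hX1 := chinese_modl hco (a i * u) (a j * v).
have hX2 := chinese_modr hco (a i * u) (a j * v).
pose K := (X %/ (a i * q) * q + u %% q)%N.
have hXK : X = (a i * K)%N.
  rewrite {1}(divn_eq X (a i * q)) hX1 -muln_modr /K; ring.
pose x : int := (a i * K)%N%:Z.
pose y : int := (a j * v)%N%:Z.
have hdiv : (m %| y - x)%Z.
  have : (k%:Z %| y - x)%Z.
    rewrite -eqz_mod_dvd; apply/eqP; rewrite /x /y !modz_nat -hXK; congr Posz.
    by rewrite -hX2.
  by rewrite !dvdzE.
pose d := ((y - x) %/ m)%Z.
pose n := x - (nat_of_ord i)%:Z * d.
exists n, d => l; rewrite !inE => /orP [/eqP -> | /eqP ->].
  have -> : n + (nat_of_ord i)%:Z * d = x by rewrite /n; ring.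
  have hai0 : (a i)%:Z != 0 by lia.
  rewrite /x PoszM; split; first exact: dvdz_mulr.
  rewrite mulKz // !modz_nat; congr Posz.
  by rewrite /K modnMDl modn_mod.
have -> : n + (nat_of_ord j)%:Z * d = x + ((y - x) %/ m)%Z * m by rewrite /n /d /m; ring.
rewrite divzK // addrC subrK.
have haj0 : (a j)%:Z != 0 by lia.
rewrite /y PoszM; split; first exact: dvdz_mulr.
by rewrite mulKz.
Qed.

Lemma Z_scal q (Hq : (0 < q)%N) c (T S : {set 'I_4}) (b : {ffun 'I_4 -> 'I_q}) : T \subset S ->
  [forall j, (j \notin S) ==> (nat_of_ord (scal Hq c T b j) == 0%N)] =
  [forall j, (j \notin S) ==> (nat_of_ord (b j) == 0%N)].
Proof.
move=> hTS; apply: eq_forallb => j; rewrite ffunE.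
case: (boolP (j \in T)) => hjT //.
by rewrite (fintype.subsetP hTS _ hjT).
Qed.
Unset Implicit Arguments. Set Strict Implicit.

Theorem lemma6p2 (R : realType) (q : nat) (chi f : nat -> int)
  (S : {set 'I_4}) (a : 'I_4 -> nat) :
  (5 <= q)%N -> coprime q 6 ->
  primitive_char q chi ->
  multiplicative_pm1 f ->
  pdist_finite R f chi ->
  (#|S| == 2)%N || (#|S| == 3)%N ->
  (forall j, j \in S -> (a j %| q)%N) ->
  Xi q chi a S = 0.
Proof.
move=> hq5 hq6 hprim _ _ hS ha.
have hq : (0 < q)%N by lia.
have hq1 : (1 < q)%N by lia.
have hc := hprim.1.
case: (exists_neg hq5 hprim) => c [hcq hc1].
case: (@inv_mod q c hq1 hcq) => c' hc'.
have hai : forall j, j \in S -> (0 < a j)%N := fun j hj => dvdn_gt0 hq (ha j hj).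
rewrite /Xi; case/orP: hS => [h2 | h3].
- move/cards2P: h2 => [i [j [hij hSij]]].
  have hiS : [set i] \subset S by rewrite hSij finset.sub1set !inE eqxx.
  have hi : (a i %| q)%N by apply: ha; rewrite hSij !inE eqxx.
  have hj : (a j %| q)%N by apply: ha; rewrite hSij !inE eqxx orbT.
  apply: (sum_neg (h := @scal q hq c [set i])).
  + exact: (can_inj (@scalK q hq c c' [set i] hc')).
  + move=> b; rewrite (@Z_scal q hq c [set i] S b hiS); congr andb.
    rewrite hSij (asboolT (E_two (scal hq c [set i] b) hq hq6 hi hj hij)).
    by rewrite (asboolT (E_two b hq hq6 hi hj hij)).
  + move=> b; rewrite (@prod_scal q hq chi c [set i] S b hc hiS) cards1 expr1 hc1 mulN1r //.
- apply: (sum_neg (h := @scal q hq c S)).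
  + exact: (can_inj (@scalK q hq c c' S hc')).
  + move=> b; rewrite (@Z_scal q hq c S S b (subxx _)); congr andb.
    apply/asboolP/asboolP => hE.
      have := @E_scal q hq a S c' _ hai hE.
      by rewrite (@scalK q hq c c' S hc').
    exact: (@E_scal q hq a S c b hai hE).
  + move=> b; rewrite (@prod_scal q hq chi c S S b hc (subxx _)) (eqP h3) hc1.
    rewrite !exprS expr0. lia.
Qed.
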